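(* Let $\Sigma$ be a signature, $T$ a monad on sets carrying a continuous $\Sigma$-algebra structure, and $\Gamma$ a relator for the monad $T$ that is inductive and respects $\Sigma$. Then applicative $\Gamma$-similarity $\precsim_\Gamma$ is a precongruence (i.e. its open extension $\precsim_\Gamma^\circ$ is a compatible preorder), and it is sound for the $\Gamma$-contextual preorder: $\precsim_\Gamma^\circ\subseteq\ \leq_\Gamma$.
   Context: An $\omega$CPPO is a poset with least element $\bot$ in which every $\omega$-chain has a lub; continuous = monotone and preserving such lubs. $T$ (unit $\eta$, bind $u\texttt{>>=}f$) carries a continuous $\Sigma$-algebra structure if each $TX$ is an $\omega$CPPO, bind is continuous in both arguments, and each $\sigma\in\Sigma$ of arity $k$ is interpreted by a continuous $\sigma^T:(TX)^k\to TX$. A relator $\Gamma$ for $T$ assigns to each $R\subseteq X\times Y$ a relation $\Gamma R\subseteq TX\times TY$ with: $=_{TX}\subseteq\Gamma(=_X)$; $\Gamma S\circ\Gamma R\subseteq\Gamma(S\circ R)$; $\Gamma((f\times g)^{-1}R)=(Tf\times Tg)^{-1}\Gamma R$ where $(f\times g)^{-1}R=\{(z,w)\mid f(z)\,R\,g(w)\}$; monotone in $R$; $x\,R\,y\Rightarrow\eta(x)\,\Gamma R\,\eta(y)$; and if $x\,R\,y\Rightarrow f(x)\,\Gamma S\,g(y)$ for all $x,y$ then $u\,\Gamma R\,v\Rightarrow(u\texttt{>>=}f)\,\Gamma S\,(v\texttt{>>=}g)$. Inductive: for every $R$, $\bot\,\Gamma R\,v$ for all $v$, and for every $\omega$-chain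 $(u_n)$, $(\forall n.\ u_n\,\Gamma R\,v)\Rightarrow\bigsqcup_n u_n\,\Gamma R\,v$. Respects $\Sigma$: $u_i\,\Gamma R\,v_i$ for all $i$ implies $\sigma^T(\vec u)\,\Gamma R\,\sigma^T(\vec v)$. Terms/values: $M,N::=\mathsf{return}\,V\mid VW\mid(M\ \mathsf{to}\ x.N)\mid\sigma(M_1,\dots,M_{\alpha(\sigma)})$, $V,W::=x\mid\lambda x.M$, modulo $\alpha$-equivalence; $M[V/x]$ substitution; $\mathcal{T}_0,\mathcal{V}_0$ closed terms/values; $\mathcal{T}(\bar x),\mathcal{V}(\bar x)$ those with free variables in $\bar x$. For closed $M$: $M^{(0)}=\bot$, $(\mathsf{return}\,V)^{(n+1)}=\eta(V)$, $((\lambda x.M)V)^{(n+1)}=(M[V/x])^{(n)}$, $(M\ \mathsf{to}\ x.N)^{(n+1)}=M^{(n)}\texttt{>>=}(V\mapsto(N[V/x])^{(n)})$, $(\sigma(\vec M))^{(n+1)}=\sigma^T(M_1^{(n)},\dots)$; this is an $\omega$-chain and $[\![M]\!]=\bigsqcup_nM^{(n)}$. A closed relation $R=(R_{\mathcal{T}}\subseteq\mathcal{T}_0\times\mathcal{T}_0,R_{\mathcal{V}}\subseteq\mathcal{V}_0\times\mathcal{V}_0)$ is an applicative $\Gamma$-simulation if $M\,R_{\mathcal{T}}\,N\Rightarrow[\![M]\!]\,\Gamma R_{\mathcal{V}}\,[\![N]\!]$ and $V\,R_{\mathcal{V}}\,W\Rightarrow VU\,R_{\mathcal{T}}\,WU$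 for every closed value $U$; $\precsim_\Gamma$ is the largest one. The open extension $R^\circ$ of a closed relation: $\bar x\vdash M\,R^\circ\,N$ iff $M,N\in\mathcal{T}(\bar x)$ and $M[\bar V/\bar x]\,R_{\mathcal{T}}\,N[\bar V/\bar x]$ for all closed values $\bar V$ substituted for $\bar x$ (similarly for values). A $\lambda$-term relation is a pair $R=(R_{\mathcal{T}},R_{\mathcal{V}})$ of sets of triples $(\bar x,M,N)$ with $M,N\in\mathcal{T}(\bar x)$, resp. $(\bar x,V,W)$ with $V,W\in\mathcal{V}(\bar x)$, written $\bar x\vdash M\,R\,N$. It is compatible if: $\bar x\vdash x\,R_{\mathcal{V}}\,x$ for $x\in\bar x$; $\bar x\cup\{x\}\vdash M\,R_{\mathcal{T}}\,N$ ($x\notin\bar x$) implies $\bar x\vdash\lambda x.M\,R_{\mathcal{V}}\,\lambda x.N$; $\bar x\vdash V\,R_{\mathcal{V}}\,W$ implies $\bar x\vdash\mathsf{return}\,V\,R_{\mathcal{T}}\,\mathsf{return}\,W$; $\bar x\vdash V\,R_{\mathcal{V}}\,V'$, $\bar x\vdash W\,R_{\mathcal{V}}\,W'$ imply $\bar x\vdash VW\,R_{\mathcal{T}}\,V'W'$; $\bar x\vdash M\,R_{\mathcal{T}}\,M'$, $\bar x\cup\{x\}\vdash N\,R_{\mathcal{T}}\,N'$ ($x\notin\bar x$) imply $\bar x\vdash(M\ \mathsf{to}\ x.N)\,R_{\mathcal{T}}\,(M'\ \mathsf{to}\ x.N')$; $\bar x\vdash M_i\,R_{\mathcal{T}}\,N_i$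 for all $i$ implies $\bar x\vdash\sigma(\vec M)\,R_{\mathcal{T}}\,\sigma(\vec N)$. A precongruence is a compatible preorder (reflexive and transitive for each $\bar x$). Let $\mathcal{U}=\mathcal{V}_0\times\mathcal{V}_0$; $R$ is $\Gamma$-preadequate if for closed $M,N$, $\emptyset\vdash M\,R_{\mathcal{T}}\,N$ implies $[\![M]\!]\,\Gamma\mathcal{U}\,[\![N]\!]$. The $\Gamma$-contextual preorder $\leq_\Gamma$ is the union of all compatible $\Gamma$-preadequate $\lambda$-term relations. *)

(* Defs.v *)
Fixpoint fin (n : nat) : Type :=
  match n with
  | O => Empty_set
  | S m => option (fin m)
  end.

Record Signature : Type := {
  sym : Type;
  arity : sym -> nat
}.

(** * Terms and values with free variables among n de Bruijn variables
    (intrinsically scoped; alpha-equivalence is syntactic equality). *)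
Inductive tm (Sg : Signature) : nat -> Type :=
| Ret : forall n, val Sg n -> tm Sg n
| App : forall n, val Sg n -> val Sg n -> tm Sg n
| Seq : forall n, tm Sg n -> tm Sg (S n) -> tm Sg n
| Op  : forall n (s : sym Sg), (fin (arity Sg s) -> tm Sg n) -> tm Sg n
with val (Sg : Signature) : nat -> Type :=
| Var : forall n, fin n -> val Sg n
| Lam : forall n, tm Sg (S n) -> val Sg n.

Arguments Ret {Sg n} V.
Arguments App {Sg n} V W.
Arguments Seq {Sg n} M N.
Arguments Op {Sg n} s args.
Arguments Var {Sg n} i.
Arguments Lam {Sg n} M.

Definition up_ren {m n : nat} (xi : fin m -> fin n) : fin (S m) -> fin (S n) :=
  fun i => match i with None => None | Some j => Some (xi j) end.

Fixpoint ren_tm {Sg : Signature} {m : nat} (M : tm Sg m) {struct M}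
  : forall n, (fin m -> fin n) -> tm Sg n :=
  match M in tm _ m0 return forall n, (fin m0 -> fin n) -> tm Sg n with
  | Ret V => fun n xi => Ret (ren_val V n xi)
  | App V W => fun n xi => App (ren_val V n xi) (ren_val W n xi)
  | Seq M1 N => fun n xi => Seq (ren_tm M1 n xi) (ren_tm N (S n) (up_ren xi))
  | Op s args => fun n xi => Op s (fun i => ren_tm (args i) n xi)
  end
with ren_val {Sg : Signature} {m : nat} (V : val Sg m) {struct V}
  : forall n, (fin m -> fin n) -> val Sg n :=
  match V in val _ m0 return forall n, (fin m0 -> fin n) -> val Sg n with
  | Var i => fun n xi => Var (xi i)
  | Lam B => fun n xi => Lam (ren_tm B (S n) (up_ren xi))
  end.

Definition up_sub {Sg : Signature} {m n : nat} (sigma : fin m -> val Sg n)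
  : fin (S m) -> val Sg (S n) :=
  fun i => match i with
           | None => @Var Sg (S n) None
           | Some j => ren_val (sigma j) (S n) Some
           end.

Fixpoint subst_tm {Sg : Signature} {m : nat} (M : tm Sg m) {struct M}
  : forall n, (fin m -> val Sg n) -> tm Sg n :=
  match M in tm _ m0 return forall n, (fin m0 -> val Sg n) -> tm Sg n with
  | Ret V => fun n s => Ret (subst_val V n s)
  | App V W => fun n s => App (subst_val V n s) (subst_val W n s)
  | Seq M1 N => fun n s => Seq (subst_tm M1 n s) (subst_tm N (S n) (up_sub s))
  | Op o args => fun n s => Op o (fun i => subst_tm (args i) n s)
  end
with subst_val {Sg : Signature} {m : nat} (V : val Sg m) {struct V}
  : forall n, (fin m -> val Sg n) -> val Sg n :=
  match V in val _ m0 return forall n, (fin m0 -> val Sg n) -> val Sg n with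
  | Var i => fun n s => s i
  | Lam B => fun n s => Lam (subst_tm B (S n) (up_sub s))
  end.

(** Single substitution M[V/x] where x is the most recently bound variable *)
Definition inst1 {Sg : Signature} {n : nat} (V : val Sg n) : fin (S n) -> val Sg n :=
  fun i => match i with None => V | Some j => Var j end.

Definition subst1 {Sg : Signature} {n : nat} (M : tm Sg (S n)) (V : val Sg n) : tm Sg n :=
  subst_tm M n (inst1 V).

Definition lam_body {Sg : Signature} {n : nat} (V : val Sg n) : option (tm Sg (S n)) :=
  match V in val _ k return option (tm Sg (S k)) with
  | Var _ => None
  | Lam B => Some B
  end.

Record Monad : Type := {
  mT : Type -> Type;
  eta : forall X, X -> mT X;
  bind : forall X Y, mT X -> (X -> mT Y) -> mT Y;
  bind_eta_l : forall X Y (x : X) (f : X -> mT Y), bind X Y (eta X x) f = f x;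
  bind_eta_r : forall X (u : mT X), bind X X u (eta X) = u;
  bind_assoc : forall X Y Z (u : mT X) (f : X -> mT Y) (g : Y -> mT Z),
      bind Y Z (bind X Y u f) g = bind X Z u (fun x => bind Y Z (f x) g)
}.

Definition tmap (T : Monad) {X Y : Type} (f : X -> Y) (u : mT T X) : mT T Y :=
  bind T X Y u (fun x => eta T Y (f x)).

Definition is_chain {A : Type} (le : A -> A -> Prop) (c : nat -> A) : Prop :=
  forall n, le (c n) (c (S n)).

(** * Continuous Sigma-algebra structure on T: each T X is an omega-CPPO
    (lub given as an operation, characterised on omega-chains), bind is
    continuous in both arguments, and every operation is continuous. *)
Record CSigAlg (Sg : Signature) (T : Monad) : Type := {
  le : forall X, mT T X -> mT T X -> Prop;
  bot : forall X, mT T X;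
  lub : forall X, (nat -> mT T X) -> mT T X;
  opT : forall X (s : sym Sg), (fin (arity Sg s) -> mT T X) -> mT T X;
  le_refl : forall X u, le X u u;
  le_trans : forall X u v w, le X u v -> le X v w -> le X u w;
  le_antisym : forall X u v, le X u v -> le X v u -> u = v;
  bot_least : forall X u, le X (bot X) u;
  lub_ub : forall X c, is_chain (le X) c -> forall n, le X (c n) (lub X c);
  lub_least : forall X c u, is_chain (le X) c ->
      (forall n, le X (c n) u) -> le X (lub X c) u;
  bind_mono_l : forall X Y u u' (f : X -> mT T Y),
      le X u u' -> le Y (bind T X Y u f) (bind T X Y u' f);
  bind_mono_r : forall X Y u (f f' : X -> mT T Y),
      (forall x, le Y (f x) (f' x)) -> le Y (bind T X Y u f) (bind T X Y u f');
  bind_cont_l : forall X Y c (f : X -> mT T Y), is_chain (le X) c ->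
      bind T X Y (lub X c) f = lub Y (fun n => bind T X Y (c n) f);
  bind_cont_r : forall X Y u (f : nat -> X -> mT T Y),
      (forall x, is_chain (le Y) (fun n => f n x)) ->
      bind T X Y u (fun x => lub Y (fun n => f n x)) = lub Y (fun n => bind T X Y u (f n));
  op_mono : forall X s (u u' : fin (arity Sg s) -> mT T X),
      (forall i, le X (u i) (u' i)) -> le X (opT X s u) (opT X s u');
  op_cont : forall X s (c : nat -> fin (arity Sg s) -> mT T X),
      (forall i, is_chain (le X) (fun n => c n i)) ->
      opT X s (fun i => lub X (fun n => c n i)) = lub X (fun n => opT X s (c n))
}.

Arguments le {Sg T} _ X _ _.
Arguments bot {Sg T} _ X.
Arguments lub {Sg T} _ X _.
Arguments opT {Sg T} _ X s _.

(** * Approximations M^(n) and semantics [[M]] = lub_n M^(n).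
    Defined for terms in any context; used only on closed terms. *)
Fixpoint approx {Sg : Signature} {T : Monad} (A : CSigAlg Sg T) (n : nat)
  : forall k, tm Sg k -> mT T (val Sg k) :=
  match n with
  | O => fun k _ => bot A (val Sg k)
  | S n' => fun k M =>
      match M in tm _ k0 return mT T (val Sg k0) with
      | Ret V => eta T _ V
      | App V W =>
          match lam_body V with
          | Some B => approx A n' _ (subst1 B W)
          | None => bot A _
          end
      | Seq M1 N =>
          bind T _ _ (approx A n' _ M1) (fun V => approx A n' _ (subst1 N V))
      | Op s args => opT A _ s (fun i => approx A n' _ (args i))
      end
  end.

Definition sem {Sg : Signature} {T : Monad} (A : CSigAlg Sg T) (M : tm Sg 0)
  : mT T (val Sg 0) :=
  lub A (val Sg 0) (fun n => approx A n 0 M).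

Definition Relator (T : Monad) : Type :=
  forall X Y : Type, (X -> Y -> Prop) -> mT T X -> mT T Y -> Prop.

Definition rcomp {X Y Z : Type} (R : X -> Y -> Prop) (S : Y -> Z -> Prop) : X -> Z -> Prop :=
  fun x z => exists y, R x y /\ S y z.

Record is_relator (T : Monad) (G : Relator T) : Prop := {
  rel_eq : forall X (u : mT T X), G X X (@eq X) u u;
  rel_comp : forall X Y Z (R : X -> Y -> Prop) (S : Y -> Z -> Prop) u v w,
      G X Y R u v -> G Y Z S v w -> G X Z (rcomp R S) u w;
  rel_inv : forall X' Y' X Y (f : X' -> X) (g : Y' -> Y) (R : X -> Y -> Prop) u v,
      G X' Y' (fun z w => R (f z) (g w)) u v <-> G X Y R (tmap T f u) (tmap T g v);
  rel_mono : forall X Y (R R' : X -> Y -> Prop) u v,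
      (forall x y, R x y -> R' x y) -> G X Y R u v -> G X Y R' u v;
  rel_eta : forall X Y (R : X -> Y -> Prop) x y, R x y -> G X Y R (eta T X x) (eta T Y y);
  rel_bind : forall X Y X' Y' (R : X -> Y -> Prop) (S : X' -> Y' -> Prop)
      (f : X -> mT T X') (g : Y -> mT T Y') u v,
      (forall x y, R x y -> G X' Y' S (f x) (g y)) ->
      G X Y R u v -> G X' Y' S (bind T X X' u f) (bind T Y Y' v g)
}.

Definition inductive {Sg : Signature} {T : Monad} (A : CSigAlg Sg T) (G : Relator T) : Prop :=
  (forall X Y (R : X -> Y -> Prop) (v : mT T Y), G X Y R (bot A X) v) /\
  (forall X Y (R : X -> Y -> Prop) (u : nat -> mT T X) (v : mT T Y),
      is_chain (le A X) u -> (forall n, G X Y R (u n) v) -> G X Y R (lub A X u) v).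

Definition respects_sig {Sg : Signature} {T : Monad} (A : CSigAlg Sg T) (G : Relator T) : Prop :=
  forall X Y (R : X -> Y -> Prop) (s : sym Sg)
    (u : fin (arity Sg s) -> mT T X) (v : fin (arity Sg s) -> mT T Y),
    (forall i, G X Y R (u i) (v i)) -> G X Y R (opT A X s u) (opT A Y s v).

Definition is_app_sim {Sg : Signature} {T : Monad} (A : CSigAlg Sg T) (G : Relator T)
  (RT : tm Sg 0 -> tm Sg 0 -> Prop) (RV : val Sg 0 -> val Sg 0 -> Prop) : Prop :=
  (forall M N, RT M N -> G (val Sg 0) (val Sg 0) RV (sem A M) (sem A N)) /\
  (forall V W, RV V W -> forall U, RT (App V U) (App W U)).

Definition simT {Sg : Signature} {T : Monad} (A : CSigAlg Sg T) (G : Relator T)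
  (M N : tm Sg 0) : Prop :=
  exists RT RV, is_app_sim A G RT RV /\ RT M N.

Definition simV {Sg : Signature} {T : Monad} (A : CSigAlg Sg T) (G : Relator T)
  (V W : val Sg 0) : Prop :=
  exists RT RV, is_app_sim A G RT RV /\ RV V W.

Definition openT {Sg : Signature} (R : tm Sg 0 -> tm Sg 0 -> Prop)
  (n : nat) (M N : tm Sg n) : Prop :=
  forall sigma : fin n -> val Sg 0, R (subst_tm M 0 sigma) (subst_tm N 0 sigma).

Definition openV {Sg : Signature} (R : val Sg 0 -> val Sg 0 -> Prop)
  (n : nat) (V W : val Sg n) : Prop :=
  forall sigma : fin n -> val Sg 0, R (subst_val V 0 sigma) (subst_val W 0 sigma).

Definition tmRel (Sg : Signature) : Type := forall n, tm Sg n -> tm Sg n -> Prop.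
Definition valRel (Sg : Signature) : Type := forall n, val Sg n -> val Sg n -> Prop.

Definition compatible {Sg : Signature} (RT : tmRel Sg) (RV : valRel Sg) : Prop :=
  (forall n (i : fin n), RV n (Var i) (Var i)) /\
  (forall n (M N : tm Sg (S n)), RT (S n) M N -> RV n (Lam M) (Lam N)) /\
  (forall n (V W : val Sg n), RV n V W -> RT n (Ret V) (Ret W)) /\
  (forall n (V V' W W' : val Sg n), RV n V V' -> RV n W W' -> RT n (App V W) (App V' W')) /\
  (forall n (M M' : tm Sg n) (N N' : tm Sg (S n)),
      RT n M M' -> RT (S n) N N' -> RT n (Seq M N) (Seq M' N')) /\
  (forall n (s : sym Sg) (Ms Ns : fin (arity Sg s) -> tm Sg n),
      (forall i, RT n (Ms i) (Ns i)) -> RT n (Op s Ms) (Op s Ns)).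

Definition precongruence {Sg : Signature} (RT : tmRel Sg) (RV : valRel Sg) : Prop :=
  compatible RT RV /\
  (forall n M, RT n M M) /\ (forall n V, RV n V V) /\
  (forall n M N P, RT n M N -> RT n N P -> RT n M P) /\
  (forall n V W U, RV n V W -> RV n W U -> RV n V U).

Definition preadequate {Sg : Signature} {T : Monad} (A : CSigAlg Sg T) (G : Relator T)
  (RT : tmRel Sg) : Prop :=
  forall M N : tm Sg 0, RT 0 M N ->
    G (val Sg 0) (val Sg 0) (fun _ _ => True) (sem A M) (sem A N).

Definition ctxT {Sg : Signature} {T : Monad} (A : CSigAlg Sg T) (G : Relator T)
  (n : nat) (M N : tm Sg n) : Prop :=
  exists (RT : tmRel Sg) (RV : valRel Sg), compatible RT RV /\ preadequate A G RT /\ RT n M N.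

Definition ctxV {Sg : Signature} {T : Monad} (A : CSigAlg Sg T) (G : Relator T)
  (n : nat) (V W : val Sg n) : Prop :=
  exists (RT : tmRel Sg) (RV : valRel Sg), compatible RT RV /\ preadequate A G RT /\ RV n V W.

(* Main.v *)
Require Import Defs.
From Stdlib Require Import FunctionalExtensionality Lia.

Scheme tm_ind2 := Induction for tm Sort Prop with val_ind2 := Induction for val Sort Prop.
Combined Scheme tmval_ind from tm_ind2, val_ind2.

Ltac fext := let x := fresh "x" in apply functional_extensionality; intro x.

Lemma ren_ren_all (Sg : Signature) :
  (forall m (M : tm Sg m) n xi k (zeta : fin n -> fin k) f,
      (forall i, f i = zeta (xi i)) -> ren_tm (ren_tm M n xi) k zeta = ren_tm M k f) /\
  (forall m (V : val Sg m) n xi k (zeta : fin n -> fin k) f,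
      (forall i, f i = zeta (xi i)) -> ren_val (ren_val V n xi) k zeta = ren_val V k f).
Proof.
  apply tmval_ind; intros; simpl; f_equal; eauto.
  - apply H0; intros [i|]; simpl; auto. f_equal; auto.
  - fext; eauto.
  - apply H; intros [i|]; simpl; auto. f_equal; auto.
Qed.

Lemma ren_subst_all (Sg : Signature) :
  (forall m (M : tm Sg m) n sigma k (xi : fin n -> fin k) f,
      (forall i, f i = ren_val (sigma i) k xi) -> ren_tm (subst_tm M n sigma) k xi = subst_tm M k f) /\
  (forall m (V : val Sg m) n sigma k (xi : fin n -> fin k) f,
      (forall i, f i = ren_val (sigma i) k xi) -> ren_val (subst_val V n sigma) k xi = subst_val V k f).
Proof.
  apply tmval_ind; intros; simpl; f_equal; eauto.
  - apply H0; intros [i|]; simpl; auto. rewrite H1.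
    rewrite (proj2 (ren_ren_all Sg) _ _ _ _ _ _ (fun j : fin _ => (Some (xi j) : fin (S k)))); auto.
    rewrite (proj2 (ren_ren_all Sg) _ _ _ _ _ _ (fun j : fin _ => (Some (xi j) : fin (S k)))); auto.
  - fext; eauto.
  - apply H; intros [i|]; simpl; auto. rewrite H0.
    rewrite (proj2 (ren_ren_all Sg) _ _ _ _ _ _ (fun j : fin _ => (Some (xi j) : fin (S k)))); auto.
    rewrite (proj2 (ren_ren_all Sg) _ _ _ _ _ _ (fun j : fin _ => (Some (xi j) : fin (S k)))); auto.
Qed.

Lemma subst_ren_all (Sg : Signature) :
  (forall m (M : tm Sg m) n xi k (sigma : fin n -> val Sg k) f,
      (forall i, f i = sigma (xi i)) -> subst_tm (ren_tm M n xi) k sigma = subst_tm M k f) /\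
  (forall m (V : val Sg m) n xi k (sigma : fin n -> val Sg k) f,
      (forall i, f i = sigma (xi i)) -> subst_val (ren_val V n xi) k sigma = subst_val V k f).
Proof.
  apply tmval_ind; intros; simpl; f_equal; eauto.
  - apply H0; intros [i|]; simpl; auto. rewrite H1; auto.
  - fext; eauto.
  - apply H; intros [i|]; simpl; auto. rewrite H0; auto.
Qed.

Lemma subst_subst_all (Sg : Signature) :
  (forall m (M : tm Sg m) n sigma k (tau : fin n -> val Sg k) f,
      (forall i, f i = subst_val (sigma i) k tau) -> subst_tm (subst_tm M n sigma) k tau = subst_tm M k f) /\
  (forall m (V : val Sg m) n sigma k (tau : fin n -> val Sg k) f,
      (forall i, f i = subst_val (sigma i) k tau) -> subst_val (subst_val V n sigma) k tau = subst_val V k f).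
Proof.
  apply tmval_ind; intros; simpl; f_equal; eauto.
  - apply H0; intros [i|]; simpl; auto. rewrite H1.
    rewrite (proj2 (subst_ren_all Sg) _ _ _ _ _ _ (fun j => ren_val (tau j) (S k) Some)); auto.
    rewrite (proj2 (ren_subst_all Sg) _ _ _ _ _ _ (fun j => ren_val (tau j) (S k) Some)); auto.
  - fext; eauto.
  - apply H; intros [i|]; simpl; auto. rewrite H0.
    rewrite (proj2 (subst_ren_all Sg) _ _ _ _ _ _ (fun j => ren_val (tau j) (S k) Some)); auto.
    rewrite (proj2 (ren_subst_all Sg) _ _ _ _ _ _ (fun j => ren_val (tau j) (S k) Some)); auto.
Qed.

Lemma subst_id_all (Sg : Signature) :
  (forall m (M : tm Sg m) sigma, (forall i, sigma i = Var i) -> subst_tm M m sigma = M) /\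
  (forall m (V : val Sg m) sigma, (forall i, sigma i = Var i) -> subst_val V m sigma = V).
Proof.
  apply tmval_ind; intros; simpl; f_equal; eauto.
  - apply H0; intros [i|]; simpl; auto. rewrite H1; auto.
  - fext; eauto.
  - apply H; intros [i|]; simpl; auto. rewrite H0; auto.
Qed.

Lemma subst_closed_tm (Sg : Signature) (M : tm Sg 0) sigma : subst_tm M 0 sigma = M.
Proof. apply (proj1 (subst_id_all Sg)); intros []. Qed.
Lemma subst_closed_val (Sg : Signature) (V : val Sg 0) sigma : subst_val V 0 sigma = V.
Proof. apply (proj2 (subst_id_all Sg)); intros []. Qed.

Lemma chain_mono (Sg : Signature) (T : Monad) (A : CSigAlg Sg T) X (c : nat -> mT T X) :
  is_chain (le A X) c -> forall m m', m <= m' -> le A X (c m) (c m').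
Proof.
  intros Hc m m' H. induction H. apply le_refl. eapply le_trans; eauto.
Qed.

Lemma approx_chain (Sg : Signature) (T : Monad) (A : CSigAlg Sg T) :
  forall k n (M : tm Sg n), le A _ (approx A k n M) (approx A (S k) n M).
Proof.
  induction k; intros n M.
  - simpl. apply bot_least.
  - destruct M; simpl.
    + apply le_refl.
    + destruct (lam_body v). apply IHk. apply le_refl.
    + eapply le_trans. apply bind_mono_l. apply IHk.
      apply bind_mono_r. intro; apply IHk.
    + apply op_mono. intro; apply IHk.
Qed.

Lemma approx_is_chain (Sg : Signature) (T : Monad) (A : CSigAlg Sg T) n (M : tm Sg n) :
  is_chain (le A _) (fun k => approx A k n M).
Proof. intro k. apply approx_chain. Qed.

Lemma lub_shift (Sg : Signature) (T : Monad) (A : CSigAlg Sg T) X (c : nat -> mT T X) :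
  is_chain (le A X) c -> lub A X c = lub A X (fun n => c (S n)).
Proof.
  intro Hc. assert (Hc' : is_chain (le A X) (fun n => c (S n))) by (intro; apply Hc).
  apply (le_antisym _ _ A).
  - apply lub_least; auto. intro n. eapply le_trans. apply Hc. apply (lub_ub _ _ _ _ _ Hc' n).
  - apply lub_least; auto. intro n. apply (lub_ub _ _ _ _ _ Hc (S n)).
Qed.

Lemma lub_diag (Sg : Signature) (T : Monad) (A : CSigAlg Sg T) X (f : nat -> nat -> mT T X) :
  (forall m n, le A X (f m n) (f (S m) n)) -> (forall m n, le A X (f m n) (f m (S n))) ->
  lub A X (fun m => lub A X (fun n => f m n)) = lub A X (fun n => f n n).
Proof.
  intros H1 H2.
  assert (Hr : forall m, is_chain (le A X) (fun n => f m n)) by (intros m n; apply H2).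
  assert (Hl : forall n, is_chain (le A X) (fun m => f m n)) by (intros n m; apply H1).
  assert (Hd : is_chain (le A X) (fun n => f n n)).
  { intro n. eapply le_trans. apply H1. apply H2. }
  assert (Ho : is_chain (le A X) (fun m => lub A X (fun n => f m n))).
  { intro m. apply lub_least; auto. intro n. eapply le_trans. apply H1.
    apply (lub_ub _ _ _ _ _ (Hr (S m)) n). }
  apply (le_antisym _ _ A).
  - apply lub_least; auto. intro m. apply lub_least; auto. intro n.
    eapply le_trans. apply (chain_mono _ _ _ _ _ (Hl n) m (Nat.max m n)); lia.
    eapply le_trans. apply (chain_mono _ _ _ _ _ (Hr (Nat.max m n)) n (Nat.max m n)); lia.
    apply (lub_ub _ _ _ _ _ Hd).
  - apply lub_least; auto. intro n. eapply le_trans.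
    apply (lub_ub _ _ _ _ _ (Hr n) n). apply (lub_ub _ _ _ _ _ Ho n).
Qed.

Lemma sem_ret (Sg : Signature) (T : Monad) (A : CSigAlg Sg T) (V : val Sg 0) :
  sem A (Ret V) = eta T _ V.
Proof.
  unfold sem. apply (le_antisym _ _ A).
  - apply lub_least. apply approx_is_chain. intros [|n]; simpl. apply bot_least. apply le_refl.
  - apply (lub_ub _ _ _ _ _ (approx_is_chain _ _ A 0 (Ret V)) 1).
Qed.

Lemma sem_app_lam (Sg : Signature) (T : Monad) (A : CSigAlg Sg T) (B : tm Sg 1) (W : val Sg 0) :
  sem A (App (Lam B) W) = sem A (subst1 B W).
Proof.
  unfold sem. rewrite lub_shift. reflexivity. apply approx_is_chain.
Qed.

Lemma sem_op (Sg : Signature) (T : Monad) (A : CSigAlg Sg T) s (Ms : fin (arity Sg s) -> tm Sg 0) :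
  sem A (Op s Ms) = opT A _ s (fun i => sem A (Ms i)).
Proof.
  unfold sem. rewrite lub_shift by apply approx_is_chain. simpl.
  rewrite (op_cont _ _ A _ s (fun n i => approx A n 0 (Ms i))). reflexivity.
  intro i. apply approx_is_chain.
Qed.

Lemma sem_seq (Sg : Signature) (T : Monad) (A : CSigAlg Sg T) (M : tm Sg 0) (N : tm Sg 1) :
  sem A (Seq M N) = bind T _ _ (sem A M) (fun V => sem A (subst1 N V)).
Proof.
  unfold sem. rewrite lub_shift by apply approx_is_chain. simpl.
  rewrite (bind_cont_r _ _ A _ _ _ (fun n V => approx A n 0 (subst1 N V)))
    by (intro; apply approx_is_chain).
  transitivity (lub A (val Sg 0) (fun n => lub A _ (fun m =>
     bind T _ _ (approx A m 0 M) (fun V => approx A n 0 (subst1 N V))))).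
  - symmetry.
    apply (lub_diag _ _ A _ (fun n m => bind T _ _ (approx A m 0 M) (fun V => approx A n 0 (subst1 N V)))).
    + intros. apply bind_mono_r. intro; apply approx_chain.
    + intros. apply bind_mono_l. apply approx_chain.
  - f_equal. apply functional_extensionality. intro n.
    rewrite bind_cont_l. reflexivity. apply approx_is_chain.
Qed.

Lemma openT_subst (Sg : Signature) (R : tm Sg 0 -> tm Sg 0 -> Prop) m (M N : tm Sg m) n
  (sigma : fin m -> val Sg n) :
  openT R m M N -> openT R n (subst_tm M n sigma) (subst_tm N n sigma).
Proof.
  intros H rho. unfold openT in *.
  rewrite !(proj1 (subst_subst_all Sg) _ _ _ _ _ _ (fun i => subst_val (sigma i) 0 rho)) by auto.
  apply H.
Qed.

Lemma openV_subst (Sg : Signature) (R : val Sg 0 -> val Sg 0 -> Prop) m (M N : val Sg m) n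
  (sigma : fin m -> val Sg n) :
  openV R m M N -> openV R n (subst_val M n sigma) (subst_val N n sigma).
Proof.
  intros H rho. unfold openV in *.
  rewrite !(proj2 (subst_subst_all Sg) _ _ _ _ _ _ (fun i => subst_val (sigma i) 0 rho)) by auto.
  apply H.
Qed.

Lemma openT_ren (Sg : Signature) (R : tm Sg 0 -> tm Sg 0 -> Prop) m (M N : tm Sg m) n
  (xi : fin m -> fin n) :
  openT R m M N -> openT R n (ren_tm M n xi) (ren_tm N n xi).
Proof.
  intros H rho. unfold openT in *.
  rewrite !(proj1 (subst_ren_all Sg) _ _ _ _ _ _ (fun i => rho (xi i))) by auto.
  apply H.
Qed.

Lemma openV_ren (Sg : Signature) (R : val Sg 0 -> val Sg 0 -> Prop) m (M N : val Sg m) n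
  (xi : fin m -> fin n) :
  openV R m M N -> openV R n (ren_val M n xi) (ren_val N n xi).
Proof.
  intros H rho. unfold openV in *.
  rewrite !(proj2 (subst_ren_all Sg) _ _ _ _ _ _ (fun i => rho (xi i))) by auto.
  apply H.
Qed.

Lemma openT_closed (Sg : Signature) (R : tm Sg 0 -> tm Sg 0 -> Prop) (M N : tm Sg 0) :
  openT R 0 M N <-> R M N.
Proof.
  unfold openT; split; intro H.
  - specialize (H (fun i => match i with end)). rewrite !subst_closed_tm in H. exact H.
  - intro; rewrite !subst_closed_tm; exact H.
Qed.

Lemma openV_closed (Sg : Signature) (R : val Sg 0 -> val Sg 0 -> Prop) (M N : val Sg 0) :
  openV R 0 M N <-> R M N.
Proof.
  unfold openV; split; intro H.
  - specialize (H (fun i => match i with end)). rewrite !subst_closed_val in H. exact H.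
  - intro; rewrite !subst_closed_val; exact H.
Qed.

(* Howe extension *)
Fixpoint HT {Sg : Signature} (ST : tm Sg 0 -> tm Sg 0 -> Prop) (SV : val Sg 0 -> val Sg 0 -> Prop)
  {m : nat} (M : tm Sg m) {struct M} : tm Sg m -> Prop :=
  match M in tm _ m0 return tm Sg m0 -> Prop with
  | Ret V => fun N => exists V', HV ST SV V V' /\ openT ST _ (Ret V') N
  | App V W => fun N => exists V' W', HV ST SV V V' /\ HV ST SV W W' /\ openT ST _ (App V' W') N
  | Seq M1 M2 => fun N => exists M1' M2', HT ST SV M1 M1' /\ HT ST SV M2 M2' /\
                                         openT ST _ (Seq M1' M2') N
  | Op s Ms => fun N => exists Ns, (forall i, HT ST SV (Ms i) (Ns i)) /\ openT ST _ (Op s Ns) N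
  end
with HV {Sg : Signature} (ST : tm Sg 0 -> tm Sg 0 -> Prop) (SV : val Sg 0 -> val Sg 0 -> Prop)
  {m : nat} (V : val Sg m) {struct V} : val Sg m -> Prop :=
  match V in val _ m0 return val Sg m0 -> Prop with
  | Var i => fun W => openV SV _ (Var i) W
  | Lam B => fun W => exists B', HT ST SV B B' /\ openV SV _ (Lam B') W
  end.


Lemma H_refl (Sg : Signature) ST SV
  (rT : forall M : tm Sg 0, ST M M) (rV : forall V : val Sg 0, SV V V) :
  (forall m (M : tm Sg m), HT ST SV M M) /\ (forall m (V : val Sg m), HV ST SV V V).
Proof.
  apply tmval_ind; intros; simpl.
  - exists v; split; auto. intro; apply rT.
  - exists v, v0; repeat split; auto. intro; apply rT.
  - exists t, t0; repeat split; auto. intro; apply rT.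
  - exists t; split; auto. intro; apply rT.
  - intro; apply rV.
  - exists t; split; auto. intro; apply rV.
Qed.

Lemma H_trans_r (Sg : Signature) ST SV
  (tT : forall M N P : tm Sg 0, ST M N -> ST N P -> ST M P)
  (tV : forall U V W : val Sg 0, SV U V -> SV V W -> SV U W) :
  (forall m (M N P : tm Sg m), HT ST SV M N -> openT ST m N P -> HT ST SV M P) /\
  (forall m (V W U : val Sg m), HV ST SV V W -> openV SV m W U -> HV ST SV V U).
Proof.
  assert (oT : forall m (M N P : tm Sg m), openT ST m M N -> openT ST m N P -> openT ST m M P)
    by (intros m M N P H1 H2 s; eauto).
  assert (oV : forall m (M N P : val Sg m), openV SV m M N -> openV SV m N P -> openV SV m M P)
    by (intros m M N P H1 H2 s; eauto).
  split.
  - intros m M N P H1 H2. destruct M; simpl in *.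
    + destruct H1 as [x [? ?]]; exists x; split; eauto.
    + destruct H1 as [x [y [? [? ?]]]]; exists x, y; repeat split; eauto.
    + destruct H1 as [x [y [? [? ?]]]]; exists x, y; repeat split; eauto.
    + destruct H1 as [x [? ?]]; exists x; split; eauto.
  - intros m V W U H1 H2. destruct V; simpl in *; eauto.
    destruct H1 as [x [? ?]]; exists x; split; eauto.
Qed.

Lemma H_ren (Sg : Signature) ST SV :
  (forall m (M : tm Sg m) n (xi : fin m -> fin n) N,
      HT ST SV M N -> HT ST SV (ren_tm M n xi) (ren_tm N n xi)) /\
  (forall m (V : val Sg m) n (xi : fin m -> fin n) W,
      HV ST SV V W -> HV ST SV (ren_val V n xi) (ren_val W n xi)).
Proof.
  apply tmval_ind; intros; simpl in *.
  - destruct H0 as [x [? ?]]; exists (ren_val x n0 xi); split; eauto.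
    apply (openT_ren _ _ _ (Ret x)); auto.
  - destruct H1 as [x [y [? [? ?]]]]; exists (ren_val x n0 xi), (ren_val y n0 xi);
      repeat split; eauto.
    apply (openT_ren _ _ _ (App x y)); auto.
  - destruct H1 as [x [y [? [? ?]]]]; exists (ren_tm x n0 xi), (ren_tm y (S n0) (up_ren xi));
      repeat split; eauto.
    apply (openT_ren _ _ _ (Seq x y)); auto.
  - destruct H0 as [x [? ?]]; exists (fun i => ren_tm (x i) n0 xi); split; eauto.
    apply (openT_ren _ _ _ (Op s x)); auto.
  - apply (openV_ren _ _ _ (Var f)); auto.
  - destruct H0 as [x [? ?]]; exists (ren_tm x (S n0) (up_ren xi)); split; eauto.
    apply (openV_ren _ _ _ (Lam x)); auto.
Qed.

Lemma H_subst (Sg : Signature) ST SV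
  (rT : forall M : tm Sg 0, ST M M) (rV : forall V : val Sg 0, SV V V)
  (tT : forall M N P : tm Sg 0, ST M N -> ST N P -> ST M P)
  (tV : forall U V W : val Sg 0, SV U V -> SV V W -> SV U W) :
  (forall m (M : tm Sg m) n (sigma tau : fin m -> val Sg n) N,
      (forall i, HV ST SV (sigma i) (tau i)) ->
      HT ST SV M N -> HT ST SV (subst_tm M n sigma) (subst_tm N n tau)) /\
  (forall m (V : val Sg m) n (sigma tau : fin m -> val Sg n) W,
      (forall i, HV ST SV (sigma i) (tau i)) ->
      HV ST SV V W -> HV ST SV (subst_val V n sigma) (subst_val W n tau)).
Proof.
  apply tmval_ind; intros; simpl in *.
  - destruct H1 as [x [? ?]]; exists (subst_val x n0 tau); split; eauto.
    apply (openT_subst _ _ _ (Ret x)); auto.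
  - destruct H2 as [x [y [? [? ?]]]]; exists (subst_val x n0 tau), (subst_val y n0 tau);
      repeat split; eauto.
    apply (openT_subst _ _ _ (App x y)); auto.
  - destruct H2 as [x [y [? [? ?]]]]; exists (subst_tm x n0 tau), (subst_tm y (S n0) (up_sub tau));
      repeat split; eauto.
    + apply H0; auto. intros [i|]; simpl.
      * apply (proj2 (H_ren Sg ST SV)); auto.
      * intro; apply rV.
    + apply (openT_subst _ _ _ (Seq x y)); auto.
  - destruct H1 as [x [? ?]]; exists (fun i => subst_tm (x i) n0 tau); split; eauto.
    apply (openT_subst _ _ _ (Op s x)); auto.
  - apply (proj2 (H_trans_r Sg ST SV tT tV)) with (tau f); auto.
    apply (openV_subst _ _ _ (Var f)); auto.
  - destruct H1 as [x [? ?]]; exists (subst_tm x (S n0) (up_sub tau)); split; eauto.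
    + apply H; auto. intros [i|]; simpl.
      * apply (proj2 (H_ren Sg ST SV)); auto.
      * intro; apply rV.
    + apply (openV_subst _ _ _ (Lam x)); auto.
Qed.

Lemma sim_is_sim (Sg : Signature) (T : Monad) (A : CSigAlg Sg T) (G : Relator T)
  (HG : is_relator T G) : is_app_sim A G (simT A G) (simV A G).
Proof.
  split.
  - intros M N [RT [RV [[H1 H2] HM]]]. eapply rel_mono; [exact HG| |apply H1; exact HM].
    intros x y Hxy. exists RT, RV; split; [split|]; auto.
  - intros V W [RT [RV [[H1 H2] HM]]] U. exists RT, RV; split; [split|]; auto.
Qed.

Lemma sim_reflT (Sg : Signature) (T : Monad) (A : CSigAlg Sg T) (G : Relator T)
  (HG : is_relator T G) (M : tm Sg 0) : simT A G M M.
Proof.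
  exists eq, eq; split; auto. split.
  - intros M1 N1 <-. apply rel_eq; auto.
  - intros V W <- U; auto.
Qed.

Lemma sim_reflV (Sg : Signature) (T : Monad) (A : CSigAlg Sg T) (G : Relator T)
  (HG : is_relator T G) (V : val Sg 0) : simV A G V V.
Proof.
  exists eq, eq; split; auto. split.
  - intros M1 N1 <-. apply rel_eq; auto.
  - intros V1 W <- U; auto.
Qed.

Lemma sim_comp_is_sim (Sg : Signature) (T : Monad) (A : CSigAlg Sg T) (G : Relator T)
  (HG : is_relator T G) :
  is_app_sim A G (rcomp (simT A G) (simT A G)) (rcomp (simV A G) (simV A G)).
Proof.
  destruct (sim_is_sim _ _ A G HG) as [H1 H2]. split.
  - intros M N [P [HMP HPN]]. eapply rel_comp; eauto.
  - intros V W [P [HVP HPW]] U. exists (App P U); split; eauto.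
Qed.

Lemma sim_transT (Sg : Signature) (T : Monad) (A : CSigAlg Sg T) (G : Relator T)
  (HG : is_relator T G) (M N P : tm Sg 0) : simT A G M N -> simT A G N P -> simT A G M P.
Proof.
  intros. exists (rcomp (simT A G) (simT A G)), (rcomp (simV A G) (simV A G)).
  split. apply sim_comp_is_sim; auto. exists N; auto.
Qed.

Lemma sim_transV (Sg : Signature) (T : Monad) (A : CSigAlg Sg T) (G : Relator T)
  (HG : is_relator T G) (M N P : val Sg 0) : simV A G M N -> simV A G N P -> simV A G M P.
Proof.
  intros. exists (rcomp (simT A G) (simT A G)), (rcomp (simV A G) (simV A G)).
  split. apply sim_comp_is_sim; auto. exists N; auto.
Qed.

Lemma tm_case0 (Sg : Signature) (P : tm Sg 0 -> Prop) :
  (forall V, P (Ret V)) -> (forall V W, P (App V W)) -> (forall M N, P (Seq M N)) ->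
  (forall s Ms, P (Op s Ms)) -> forall M, P M.
Proof.
  intros H1 H2 H3 H4 M.
  assert (H : forall n (M : tm Sg n) (e : n = 0), P (eq_rect n (tm Sg) M 0 e)).
  { destruct M0; intro e; subst; simpl; auto. }
  exact (H 0 M eq_refl).
Qed.

Lemma val_case0 (Sg : Signature) (P : val Sg 0 -> Prop) :
  (forall B, P (Lam B)) -> forall V, P V.
Proof.
  intros H1 V.
  assert (H : forall n (V : val Sg n) (e : n = 0), P (eq_rect n (val Sg) V 0 e)).
  { destruct V0; intro e; subst; simpl; auto. destruct f. }
  exact (H 0 V eq_refl).
Qed.

Lemma key (Sg : Signature) (T : Monad) (A : CSigAlg Sg T) (G : Relator T)
  (HG : is_relator T G) (Hind : inductive A G) (Hsig : respects_sig A G) :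
  forall (M N : tm Sg 0), HT (simT A G) (simV A G) M N ->
    G _ _ (fun V W => HV (simT A G) (simV A G) V W) (sem A M) (sem A N).
Proof.
  set (ST := simT A G). set (SV := simV A G).
  assert (rT : forall M, ST M M) by (apply sim_reflT; auto).
  assert (rV : forall V, SV V V) by (apply sim_reflV; auto).
  assert (tT : forall M N P, ST M N -> ST N P -> ST M P) by (apply sim_transT; auto).
  assert (tV : forall M N P, SV M N -> SV N P -> SV M P) by (apply sim_transV; auto).
  destruct (sim_is_sim _ _ A G HG) as [S1 S2].
  assert (comp : forall u (P N : tm Sg 0), G _ _ (fun V W => HV ST SV V W) u (sem A P) ->
                   ST P N -> G _ _ (fun V W => HV ST SV V W) u (sem A N)).
  { intros u P N H1 H2. eapply rel_mono; [exact HG| |eapply rel_comp; [exact HG|exact H1|apply S1; exact H2]].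
    intros x y [z [Hxz Hzy]]. apply (proj2 (H_trans_r Sg ST SV tT tV)) with z; auto.
    apply openV_closed; auto. }
  assert (sub1 : forall (B B' : tm Sg 1) (W W' : val Sg 0), HT ST SV B B' -> HV ST SV W W' ->
             HT ST SV (subst1 B W) (subst1 B' W')).
  { intros. apply (proj1 (H_subst Sg ST SV rT rV tT tV)); auto. intros [[]|]; simpl; auto. }
  assert (K : forall k (M N : tm Sg 0), HT ST SV M N ->
            G _ _ (fun V W => HV ST SV V W) (approx A k 0 M) (sem A N)).
  { induction k.
    - intros. apply (proj1 Hind).
    - intro M. pattern M; apply tm_case0; clear M.
      + intros V N [V' [H1 H2]]. simpl. apply comp with (Ret V').
        * rewrite sem_ret. apply rel_eta; auto.
        * apply openT_closed; auto.
      + intros V W N [V' [W' [H1 [H2 H3]]]]. revert H1. pattern V; apply val_case0; clear V.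
        intros B [B' [H4 H5]]. simpl.
        apply comp with (App (Lam B') W').
        * rewrite sem_app_lam. apply IHk. apply sub1; auto.
        * apply tT with (App V' W'). apply S2. apply openV_closed; auto.
          apply openT_closed; auto.
      + intros M1 M2 N [M1' [M2' [H1 [H2 H3]]]]. simpl.
        apply comp with (Seq M1' M2').
        * rewrite sem_seq. eapply rel_bind; eauto.
        * apply openT_closed; auto.
      + intros s Ms N [Ns [H1 H2]]. simpl.
        apply comp with (Op s Ns).
        * rewrite sem_op. apply Hsig. intro i. apply IHk. auto.
        * apply openT_closed; auto. }
  intros M N H. unfold sem at 1. apply (proj2 Hind).
  apply approx_is_chain. intro k. apply K; auto.
Qed.

Lemma H_sound (Sg : Signature) (T : Monad) (A : CSigAlg Sg T) (G : Relator T)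
  (HG : is_relator T G) (Hind : inductive A G) (Hsig : respects_sig A G) :
  (forall m (M N : tm Sg m), HT (simT A G) (simV A G) M N -> openT (simT A G) m M N) /\
  (forall m (V W : val Sg m), HV (simT A G) (simV A G) V W -> openV (simV A G) m V W).
Proof.
  set (ST := simT A G). set (SV := simV A G).
  assert (rT : forall M, ST M M) by (apply sim_reflT; auto).
  assert (rV : forall V, SV V V) by (apply sim_reflV; auto).
  assert (tT : forall M N P, ST M N -> ST N P -> ST M P) by (apply sim_transT; auto).
  assert (tV : forall M N P, SV M N -> SV N P -> SV M P) by (apply sim_transV; auto).
  assert (Hsim : is_app_sim A G (fun M N : tm Sg 0 => HT ST SV M N) (fun V W : val Sg 0 => HV ST SV V W)).
  { split.
    - intros. apply key; auto.
    - intros V W H U. simpl. exists W, U; repeat split; auto.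
      + apply (proj2 (H_refl Sg ST SV rT rV)).
      + intro; apply rT. }
  split.
  - intros m M N H sigma. exists (fun M N : tm Sg 0 => HT ST SV M N), (fun V W : val Sg 0 => HV ST SV V W).
    split; auto. apply (proj1 (H_subst Sg ST SV rT rV tT tV)); auto.
    intro; apply (proj2 (H_refl Sg ST SV rT rV)).
  - intros m V W H sigma. exists (fun M N : tm Sg 0 => HT ST SV M N), (fun V W : val Sg 0 => HV ST SV V W).
    split; auto. apply (proj2 (H_subst Sg ST SV rT rV tT tV)); auto.
    intro; apply (proj2 (H_refl Sg ST SV rT rV)).
Qed.

Lemma open_compat (Sg : Signature) (T : Monad) (A : CSigAlg Sg T) (G : Relator T)
  (HG : is_relator T G) (Hind : inductive A G) (Hsig : respects_sig A G) :
  compatible (openT (simT A G)) (openV (simV A G)).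
Proof.
  set (ST := simT A G). set (SV := simV A G).
  assert (rT : forall M, ST M M) by (apply sim_reflT; auto).
  assert (rV : forall V, SV V V) by (apply sim_reflV; auto).
  assert (tT : forall M N P, ST M N -> ST N P -> ST M P) by (apply sim_transT; auto).
  assert (tV : forall M N P, SV M N -> SV N P -> SV M P) by (apply sim_transV; auto).
  destruct (H_sound Sg T A G HG Hind Hsig) as [S1 S2].
  destruct (H_trans_r Sg ST SV tT tV) as [R1 R2].
  destruct (H_refl Sg ST SV rT rV) as [F1 F2].
  assert (O1 : forall m (M N : tm Sg m), openT ST m M N -> HT ST SV M N) by eauto.
  assert (O2 : forall m (M N : val Sg m), openV SV m M N -> HV ST SV M N) by eauto.
  assert (oT : forall m (M : tm Sg m), openT ST m M M) by (intros m M s; apply rT).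
  assert (oV : forall m (M : val Sg m), openV SV m M M) by (intros m M s; apply rV).
  repeat split.
  - intros; apply oV.
  - intros n M N H. apply S2. simpl. exists N; split; auto.
  - intros n V W H. apply S1. simpl. exists W; split; auto.
  - intros n V V' W W' H1 H2. apply S1. simpl. exists V', W'; repeat split; auto.
  - intros n M M' N N' H1 H2. apply S1. simpl. exists M', N'; repeat split; auto.
  - intros n s Ms Ns H. apply S1. simpl. exists Ns; split; auto.
Qed.

Theorem mainTheorem10 (Sg : Signature) (T : Monad) (A : CSigAlg Sg T) (G : Relator T)
  (HG : is_relator T G) (Hind : inductive A G) (Hsig : respects_sig A G) :
  precongruence (openT (simT A G)) (openV (simV A G)) /\
  (forall n (M N : tm Sg n), openT (simT A G) n M N -> ctxT A G n M N) /\
  (forall n (V W : val Sg n), openV (simV A G) n V W -> ctxV A G n V W).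
Proof.
  assert (C := open_compat Sg T A G HG Hind Hsig).
  assert (P : preadequate A G (openT (simT A G))).
  { intros M N H. apply (openT_closed Sg (simT A G)) in H.
    eapply rel_mono; [exact HG| |apply (proj1 (sim_is_sim _ _ A G HG)); exact H]. auto. }
  split; [|split].
  - split; auto. repeat split.
    + intros n M s; apply sim_reflT; auto.
    + intros n V s; apply sim_reflV; auto.
    + intros n M N P' H1 H2 s; eapply sim_transT; eauto.
    + intros n V W U H1 H2 s; eapply sim_transV; eauto.
  - intros n M N H. exists (openT (simT A G)), (openV (simV A G)); auto.
  - intros n V W H. exists (openT (simT A G)), (openV (simV A G)); auto.
Qed.
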